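(* Let $K$ be a field of characteristic $\neq 2$ and $A\in K[t]\setminus K$ non-constant. Then the equation $x^2+y^2+z^2=Axyz$ has a fundamental Markoff triple if and only if $K$ contains a square root $i$ of $-1$. Moreover, if $i\in K$, every fundamental Markoff triple has the form $(0,\varepsilon if,f)$ for some $f\in K[t]\setminus K$ and $\varepsilon\in\{\pm1\}$.
   Context: Solutions are triples $(x,y,z)\in K[t]^3$ with $x^2+y^2+z^2=Axyz$. The degree of the zero polynomial is $-\infty$. The height is $\max\{\deg x,\deg y,\deg z\}$. A Markoff triple is a solution with positive height and $\deg x\le\deg y\le\deg z$; it is fundamental if moreover $\deg y=\deg z$. *)

(* Defs.v *)
From HB Require Import structures.
From mathcomp Require Import all_boot all_order all_algebra.
Set Implicit Arguments. Unset Strict Implicit. Unset Printing Implicit Defensive.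
Import GRing.Theory.
Local Open Scope ring_scope.

(* Degrees are encoded through [size] (size p = deg p + 1, size 0 = 0, which
   matches deg 0 = -oo for all comparisons). *)

Definition markoff_sol (K : fieldType) (A x y z : {poly K}) : Prop :=
  x ^+ 2 + y ^+ 2 + z ^+ 2 = A * x * y * z.

(* height = max deg; positive height <-> max size >= 2. *)
Definition markoff_triple (K : fieldType) (A x y z : {poly K}) : Prop :=
  [/\ markoff_sol A x y z,
      (1 < maxn (size x) (maxn (size y) (size z)))%N,
      (size x <= size y)%N & (size y <= size z)%N].

Definition fundamental_markoff (K : fieldType) (A x y z : {poly K}) : Prop :=
  markoff_triple A x y z /\ size y = size z.

(* Main.v *)
Require Import Defs.
From HB Require Import structures.
From mathcomp Require Import all_boot all_order all_algebra.
From mathcomp Require Import ring zify.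
Import GRing.Theory.
Local Open Scope ring_scope.

Lemma nat_aux1 (a b c d : nat) : (0 < a)%N -> (0 < b)%N -> (0 < c)%N -> (0 < d)%N ->
  (((a + b).-1 + c).-1 + d).-1 = (a + b + c + d - 3)%N.
Proof. rewrite -!subn1; lia. Qed.

Lemma nat_aux2 (a b : nat) : (0 < a)%N -> (a <= b)%N -> ((a + a).-1 <= b + b - 1)%N.
Proof. rewrite -!subn1; lia. Qed.

Lemma fund_x0 (K : fieldType) (A x y z : {poly K}) :
  (1 < size A)%N -> fundamental_markoff A x y z ->
  [/\ x = 0, y != 0, z != 0, (1 < size z)%N & y ^+ 2 + z ^+ 2 = 0].
Proof.
move=> hA [[hs hmax hxy hyz] hyz'].
have hz : (1 < size z)%N by move: hmax; lia.
have zn : z != 0 by rewrite -size_poly_gt0; lia.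
have yn : y != 0 by rewrite -size_poly_gt0; lia.
have An : A != 0 by rewrite -size_poly_gt0; lia.
have x0 : x = 0.
  apply/eqP; apply/negPn/negP => xn.
  have e1 : size (A * x * y * z) = (size A + size x + size y + size z - 3)%N.
    have pA : (0 < size A)%N by rewrite size_poly_gt0.
    have px : (0 < size x)%N by rewrite size_poly_gt0.
    have py : (0 < size y)%N by rewrite size_poly_gt0.
    rewrite !size_mul ?mulf_neq0 //; apply: nat_aux1 => //; exact: ltnW hz.
  have e2 : (size (x ^+ 2 + y ^+ 2 + z ^+ 2)%R <= size z + size z - 1)%N.
    have sx : (size (x ^+ 2)%R <= size z + size z - 1)%N.
      by rewrite expr2 size_mul //; apply: nat_aux2; [rewrite size_poly_gt0|exact: leq_trans hxy hyz].
    have sy : (size (y ^+ 2)%R <= size z + size z - 1)%N.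
      by rewrite expr2 size_mul //; apply: nat_aux2; [rewrite size_poly_gt0|exact: hyz].
    have sz : (size (z ^+ 2)%R <= size z + size z - 1)%N.
      by rewrite expr2 size_mul //; apply: nat_aux2; [exact: ltnW hz|done].
    apply: leq_trans (size_add _ _) _; rewrite geq_max sz andbT.
    apply: leq_trans (size_add _ _) _; by rewrite geq_max sx sy.
  move: e2; rewrite hs e1; have px : (0 < size x)%N by rewrite size_poly_gt0.
  lia.
split=> //.
by move: hs; rewrite /markoff_sol x0 mulr0 !mul0r expr0n /= add0r.
Qed.

Theorem lemma2p3 (K : fieldType) (A : {poly K})
  (hchar : (2%:R : K) != 0) (hA : (1 < size A)%N) :
  ((exists x y z : {poly K}, fundamental_markoff A x y z) <->
   (exists i : K, i ^+ 2 = -1)) /\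
  (forall i : K, i ^+ 2 = -1 ->
   forall x y z : {poly K}, fundamental_markoff A x y z ->
   exists (f : {poly K}) (eps : K),
     (1 < size f)%N /\ (eps = 1 \/ eps = -1) /\
     x = 0 /\ y = (eps * i) *: f /\ z = f).
Proof.
split; first split.
- move=> [x [y [z hf]]].
  have [_ yn zn _ e] := @fund_x0 _ A _ _ _ hA hf.
  have lz : lead_coef z != 0 by rewrite lead_coef_eq0.
  exists (lead_coef y / lead_coef z).
  have : lead_coef (y ^+ 2) = lead_coef (- z ^+ 2).
    by rewrite -[y ^+ 2]subr0 -e; congr lead_coef; ring.
  rewrite lead_coefN !lead_coef_exp => h.
  rewrite expr_div_n h; field; exact: lz.
- move=> [i hi].
  have sX : size ('X : {poly K}) = 2%N by rewrite size_polyX.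
  exists 0, (i *: 'X), 'X.
  have i0 : i != 0 by apply/eqP => i0; move: hi; rewrite i0 expr0n /= => /eqP;
    rewrite eq_sym oppr_eq0 oner_eq0.
  have sY : size (i *: ('X : {poly K})) = 2%N by rewrite size_scale.
  split; last by rewrite sY sX.
  split; rewrite ?size_poly0 ?sY ?sX //.
  rewrite /markoff_sol !mulr0 mul0r expr0n /= add0r -mul_polyC.
  have -> : (i%:P * 'X) ^+ 2 + ('X : {poly K}) ^+ 2 = ((i ^+ 2)%:P + 1) * 'X ^+ 2.
    by rewrite rmorphXn /=; ring.
  by rewrite hi polyCN polyC1 addNr !mul0r.
- move=> i hi x y z hf.
  have [x0 yn zn hz e] := @fund_x0 _ A _ _ _ hA hf.
  have : (y - i *: z) * (y + i *: z) = 0.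
    rewrite -mul_polyC.
    have -> : (y - i%:P * z) * (y + i%:P * z) = y ^+ 2 + z ^+ 2 - ((i ^+ 2)%:P + 1) * z ^+ 2.
      by rewrite rmorphXn /=; ring.
    by rewrite e hi polyCN polyC1 addNr mul0r subr0.
  move/eqP; rewrite mulf_eq0 => /orP [] /eqP h.
  + exists z, 1; split=> //; split; first by left.
    by split=> //; split=> //; rewrite mul1r; apply/eqP; rewrite -subr_eq0 h.
  + exists z, (-1); split=> //; split; first by right.
    split=> //; split=> //; rewrite mulN1r scaleNr; apply/eqP.
    by rewrite -subr_eq0 opprK h.
Qed.
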